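(* Suppose that $\Re s=1$, $u\ge1$, and $|s|>u$. For integers $m,\nu\ge1$, \[ \left|\frac{\partial^\nu}{\partial u^\nu}\left(G(u,s)^m\right)\right|\ll_{m,\nu}\frac{(1+\log|s|)^{m-1}}{u^\nu}\left(\frac{|s|}{u}\right)^{\nu-1}, \] with implied constant depending only on $m,\nu$.
   Context: $G(u,s):=\int_{0}^{1/u}\frac{1-e^{-ts}}{t}\,dt$. *)

(* Defs.v *)
From Stdlib Require Import Reals.
From Coquelicot Require Import Coquelicot.
Open Scope R_scope.

Definition Cexp (z : C) : C :=
  (exp (Re z) * cos (Im z), exp (Re z) * sin (Im z)).

Definition G (u : R) (s : C) : C :=
  RInt (V := C_R_CompleteNormedModule)
    (fun t : R => Cdiv (Cminus 1 (Cexp (Copp (Cmult (RtoC t) s)))) (RtoC t))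
    0 (/ u).

Definition Cderive_n (f : R -> C) (n : nat) (u : R) : C :=
  (Derive_n (fun x => Re (f x)) n u, Derive_n (fun x => Im (f x)) n u).

(* Main.v *)
Require Import Defs.
From Stdlib Require Import Reals Lra Lia List.
From Coquelicot Require Import Coquelicot.
Open Scope R_scope.

Definition CD (f df : R -> C) := forall v, 0 < v ->
  is_derive (fun x => fst (f x)) v (fst (df v)) /\
  is_derive (fun x => snd (f x)) v (snd (df v)).
Lemma isd_eq (f : R -> R) x l l' : is_derive f x l -> l = l' -> is_derive f x l'.
Proof. intros H ->; exact H. Qed.
Lemma CD_mult f df g dg : CD f df -> CD g dg ->
  CD (fun x => Cmult (f x) (g x)) (fun x => Cplus (Cmult (df x) (g x)) (Cmult (f x) (dg x))).
Proof.
  intros Hf Hg v Hv; destruct (Hf v Hv) as [H1 H2]; destruct (Hg v Hv) as [H3 H4].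
  assert (cm : forall n m : R_AbsRing, mult n m = mult m n) by (intros; apply Rmult_comm).
  split.
  - pose proof (is_derive_minus _ _ _ _ _ (is_derive_mult _ _ _ _ _ H1 H3 cm) (is_derive_mult _ _ _ _ _ H2 H4 cm)) as H.
    eapply isd_eq. exact H.
    match goal with |- ?a = ?b => change (@eq R a b) end. cbn -[Rmult Rplus Ropp Rminus]. ring.
  - pose proof (is_derive_plus _ _ _ _ _ (is_derive_mult _ _ _ _ _ H1 H4 cm) (is_derive_mult _ _ _ _ _ H2 H3 cm)) as H.
    eapply isd_eq. exact H.
    match goal with |- ?a = ?b => change (@eq R a b) end. cbn -[Rmult Rplus Ropp Rminus]. ring.
Qed.

Ltac Rchg := match goal with |- ?a = ?b => change (@eq R a b) end; cbn -[Rmult Rplus Ropp Rminus].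

Lemma isd_const (c x : R) : is_derive (fun _ => c) x 0.
Proof. exact (is_derive_const (K:=R_AbsRing) (V:=R_NormedModule) c x). Qed.

Lemma CD_const c : CD (fun _ => c) (fun _ => RtoC 0).
Proof. intros v _; split; simpl; apply isd_const. Qed.

Lemma CD_plus f df g dg : CD f df -> CD g dg ->
  CD (fun x => Cplus (f x) (g x)) (fun x => Cplus (df x) (dg x)).
Proof.
  intros Hf Hg v Hv; destruct (Hf v Hv) as [H1 H2]; destruct (Hg v Hv) as [H3 H4].
  split.
  - exact (is_derive_plus _ _ _ _ _ H1 H3).
  - exact (is_derive_plus _ _ _ _ _ H2 H4).
Qed.

Lemma CD_eqd f df df' : CD f df -> (forall v, 0 < v -> df v = df' v) -> CD f df'.
Proof. intros H E v Hv; rewrite <- E by exact Hv; apply H, Hv. Qed.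

Lemma CD_pow f df n : CD f df ->
  CD (fun x => Cpow (f x) n) (fun x => Cmult (RtoC (INR n)) (Cmult (Cpow (f x) (n - 1)) (df x))).
Proof.
  intros Hf; induction n.
  - intros v Hv; split; simpl; (eapply isd_eq; [apply isd_const|]); simpl; ring.
  - apply CD_eqd with (fun x => Cplus (Cmult (df x) (Cpow (f x) n))
                 (Cmult (f x) (Cmult (RtoC (INR n)) (Cmult (Cpow (f x) (n - 1)) (df x))))).
    + apply (CD_mult _ _ _ _ Hf IHn).
    + intros v _. replace (S n - 1)%nat with n by lia. rewrite S_INR.
      destruct n. simpl. rewrite RtoC_plus. ring.
      replace (S n - 1)%nat with n by lia. rewrite Cpow_S.
      rewrite RtoC_plus. ring.
Qed.

Import ListNotations.

Inductive tm := Tm (c : R) (j e b a : nat).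

Section Terms.
Variables (g E w : R -> C) (s : C).
Hypothesis Hg : CD g (fun x => Cmult (Cminus (E x) 1) (w x)).
Hypothesis HE : CD E (fun x => Cmult (Cmult (E x) s) (Cmult (w x) (w x))).
Hypothesis Hw : CD w (fun x => Copp (Cmult (w x) (w x))).

Definition tval (t : tm) (x : R) : C :=
  let 'Tm c j e b a := t in
  Cmult (RtoC c) (Cmult (Cmult (Cmult (Cpow (g x) j) (Cpow (E x) e)) (Cpow s b)) (Cpow (w x) a)).

Definition ev (l : list tm) (x : R) : C := fold_right (fun t acc => Cplus (tval t x) acc) (RtoC 0) l.

Definition dt (t : tm) : list tm :=
  let 'Tm c j e b a := t in
  [Tm (- c * INR j) (j - 1) e b (S a); Tm (c * INR j) (j - 1) (S e) b (S a);
   Tm (c * INR e) j e (S b) (S (S a)); Tm (- c * INR a) j e b (S a)].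

Definition dl (l : list tm) : list tm := flat_map dt l.

Lemma ev_app l1 l2 x : ev (l1 ++ l2) x = Cplus (ev l1 x) (ev l2 x).
Proof. induction l1; simpl. ring. rewrite IHl1. ring. Qed.

Lemma CD_tval t : CD (tval t) (ev (dt t)).
Proof.
  destruct t as [c j e b a].
  unfold tval. eapply CD_eqd.
  - eapply CD_mult; [apply CD_const|].
    eapply CD_mult; [|apply CD_pow, Hw].
    eapply CD_mult; [|apply CD_const].
    eapply CD_mult; apply CD_pow; eassumption.
  - intros v _. simpl.
    rewrite !RtoC_mult, !RtoC_opp.
    destruct e as [|e]; destruct a as [|a]; simpl; rewrite ?Nat.sub_0_r; ring.
Qed.

Lemma CD_ev l : CD (ev l) (ev (dl l)).
Proof.
  induction l as [|t l IH]; simpl.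
  - eapply CD_eqd; [apply CD_const|]. reflexivity.
  - eapply CD_eqd; [apply CD_plus; [apply CD_tval|apply IH]|].
    intros v _. rewrite ev_app. reflexivity.
Qed.

Definition F0 (m : nat) := [Tm 1 m 0 0 0].
Definition Fk (m k : nat) := ev (Nat.iter k dl (F0 m)).

Lemma CD_Fk m k : CD (Fk m k) (Fk m (S k)).
Proof. unfold Fk. simpl. apply CD_ev. Qed.

Lemma Fk0 m x : Fk m 0 x = Cpow (g x) m.
Proof. unfold Fk, F0; simpl. ring. Qed.

Definition sumc (l : list tm) : R := fold_right (fun t acc => match t with Tm c _ _ _ _ => Rabs c + acc end) 0 l.

Lemma ev_bound l x M : 0 <= M ->
  List.Forall (fun t => match t with Tm c _ _ _ _ => Cmod (tval t x) <= Rabs c * M end) l ->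
  Cmod (ev l x) <= sumc l * M.
Proof.
  intros HM; induction l as [|t l IH]; intros H; simpl.
  - rewrite Cmod_0. lra.
  - inversion H; subst. destruct t as [c j e b a].
    eapply Rle_trans; [apply Cmod_triangle|]. specialize (IH H3). lra.
Qed.
End Terms.

Definition Inv (m nu : nat) (l : list tm) :=
  List.Forall (fun t => match t with Tm c j e b a => c = 0 \/ ((j <= m - 1)%nat /\ (b <= nu - 1)%nat /\ a = (b + nu)%nat) end) l.

Lemma Inv_dl m nu l : (1 <= nu)%nat -> Inv m nu l -> Inv m (S nu) (dl l).
Proof.
  intros Hnu H; induction H as [|t l Ht Hl IH]; simpl. constructor.
  apply List.Forall_app; split; [|exact IH].
  destruct t as [c j e b a]. simpl.
  destruct Ht as [-> | [H1 [H2 H3]]];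
  repeat apply List.Forall_cons; try apply List.Forall_nil.
  all: first [left; ring | right; lia].
Qed.

Lemma Inv_iter m nu : (1 <= m)%nat -> (1 <= nu)%nat -> Inv m nu (Nat.iter nu dl (F0 m)).
Proof.
  intros Hm Hnu. induction nu as [|nu IH]; [lia|].
  destruct nu as [|nu].
  - simpl. repeat apply List.Forall_cons; try apply List.Forall_nil.
    - right; lia. - right; lia. - left; ring. - left; ring.
  - change (Inv m (S (S nu)) (dl (Nat.iter (S nu) dl (F0 m)))).
    apply Inv_dl; [lia|]. apply IH; lia.
Qed.

Lemma Dn_CD (F : nat -> R -> C) : (forall k, CD (F k) (F (S k))) -> forall n v, 0 < v ->
  Derive_n (fun x => fst (F 0%nat x)) n v = fst (F n v) /\
  Derive_n (fun x => snd (F 0%nat x)) n v = snd (F n v).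
Proof.
  intros HF n; induction n as [|n IH]; intros v Hv. simpl; auto.
  assert (Hl : locally v (fun t => 0 < t)).
  { exists (mkposreal v Hv). intros t Ht. cbn in Ht. unfold AbsRing_ball, abs, minus, plus, opp in Ht. simpl in Ht.
    apply Rabs_lt_between in Ht. lra. }
  simpl. split.
  - rewrite (Derive_ext_loc _ (fun x => fst (F n x))).
    + apply is_derive_unique, HF, Hv.
    + eapply filter_imp; [|exact Hl]. intros t Ht. apply IH, Ht.
  - rewrite (Derive_ext_loc _ (fun x => snd (F n x))).
    + apply is_derive_unique, HF, Hv.
    + eapply filter_imp; [|exact Hl]. intros t Ht. apply IH, Ht.
Qed.



Definition wf (v : R) : C := RtoC (/ v).
Definition Ef (s : C) (v : R) : C := Cexp (Copp (Cmult (RtoC (/ v)) s)).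

Lemma CD_wf : CD wf (fun x => Copp (Cmult (wf x) (wf x))).
Proof.
  intros v Hv; unfold wf; split; simpl.
  - auto_derive. lra. Rchg. field. lra.
  - eapply isd_eq. apply isd_const. Rchg. ring.
Qed.

Lemma CD_Ef s : CD (Ef s) (fun x => Cmult (Cmult (Ef s x) s) (Cmult (wf x) (wf x))).
Proof.
  destruct s as [a b]. intros v Hv; unfold Ef, wf, Cexp; split.
  - eapply is_derive_ext. intro t. simpl. reflexivity.
    auto_derive. lra.
    Rchg. unfold Rminus. set (X := exp _); set (Y := cos _); set (Z := sin _). field. lra.
  - eapply is_derive_ext. intro t. simpl. reflexivity.
    auto_derive. lra.
    Rchg. unfold Rminus. set (X := exp _); set (Y := cos _); set (Z := sin _). field. lra.
Qed.

Lemma Cmod_Cexp z : Cmod (Cexp z) = exp (Re z).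
Proof.
  destruct z as [x y]; unfold Cexp, Cmod, Re, Im; simpl fst; simpl snd.
  replace ((exp x * cos y) ^ 2 + (exp x * sin y) ^ 2)
    with (exp x ^ 2 * ((sin y)² + (cos y)²)) by (unfold Rsqr; ring).
  rewrite sin2_cos2, Rmult_1_r. apply sqrt_pow2. apply Rlt_le, exp_pos.
Qed.


Definition hG (s : C) (t : R) : C :=
  Cdiv (Cminus 1 (Cexp (Copp (Cmult (RtoC t) s)))) (RtoC t).

Definition phr (a b t : R) := 1 - exp (-(t*a)) * cos (t*b).
Definition phi (a b t : R) := exp (-(t*a)) * sin (t*b).
Definition tld (l : R) (f : R -> R) (t : R) := if Req_EM_T t 0 then l else f t / t.

Lemma hG_eq a b t : t <> 0 -> hG (a, b) t = (phr a b t / t, phi a b t / t).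
Proof.
  intros Ht. unfold hG, phr, phi, Cdiv, Cminus, Cexp, Cinv; simpl.
  replace (- (t * a - 0 * b)) with (- (t * a)) by ring.
  replace (- (t * b + 0 * a)) with (- (t * b)) by ring.
  rewrite cos_neg, sin_neg. unfold Cplus, Cmult, Copp, RtoC; simpl. f_equal; field; auto.
Qed.

Lemma cont_tld (f : R -> R) (l : R) :
  (forall x, ex_derive f x) -> f 0 = 0 -> is_derive f 0 l -> forall x, continuous (tld l f) x.
Proof.
  intros Hd H0 Hl x.
  destruct (Req_EM_T x 0) as [->|Hx].
  - apply continuity_pt_filterlim.
    apply is_derive_Reals in Hl.
    intros eps Heps.
    destruct (Hl eps Heps) as [del Hdel].
    exists del; split; [apply cond_pos|].
    intros t [[_ Ht] Htd]. unfold tld. unfold R_dist in *; simpl in *.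
    destruct (Req_EM_T t 0) as [E|_]; [congruence|].
    destruct (Req_EM_T 0 0) as [_|E]; [|congruence].
    specialize (Hdel t (not_eq_sym Ht)). rewrite Rplus_0_l, H0, Rminus_0_r in Hdel.
    unfold Rdist in *. rewrite Rminus_0_r in Htd. apply Hdel, Htd.
  - apply continuous_ext_loc with (fun t => f t / t).
    + assert (Hl' : locally x (fun t => t <> 0)).
      { exists (mkposreal (Rabs x) (Rabs_pos_lt _ Hx)). intros t Ht E. subst.
        cbn in Ht. unfold AbsRing_ball, abs, minus, plus, opp in Ht. simpl in Ht.
        rewrite Rplus_0_l, Rabs_Ropp in Ht. lra. }
      eapply filter_imp; [|exact Hl']. intros t Ht. unfold tld.
      destruct (Req_EM_T t 0); [congruence|reflexivity].
    + apply continuity_pt_filterlim. apply continuity_pt_div; auto.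
      * apply continuity_pt_filterlim. exact (ex_derive_continuous (K:=R_AbsRing) (V:=R_NormedModule) f x (Hd x)).
      * apply continuity_pt_id.
Qed.


Lemma phr_d a b x : is_derive (phr a b) x (a * exp (-(x*a)) * cos (x*b) + exp (-(x*a)) * b * sin (x*b)).
Proof. unfold phr. auto_derive; auto. ring. Qed.
Lemma phi_d a b x : is_derive (phi a b) x (- a * exp (-(x*a)) * sin (x*b) + exp (-(x*a)) * b * cos (x*b)).
Proof. unfold phi. auto_derive; auto. ring. Qed.

Lemma cont_r a b x : continuous (tld a (phr a b)) x.
Proof.
  apply cont_tld.
  - intro y; eexists; apply phr_d.
  - unfold phr. rewrite !Rmult_0_l, Ropp_0, exp_0, cos_0. ring.
  - eapply isd_eq. apply phr_d. rewrite !Rmult_0_l, Ropp_0, exp_0, cos_0, sin_0. Rchg; ring.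
Qed.
Lemma cont_i a b x : continuous (tld b (phi a b)) x.
Proof.
  apply cont_tld.
  - intro y; eexists; apply phi_d.
  - unfold phi. rewrite !Rmult_0_l, sin_0. ring.
  - eapply isd_eq. apply phi_d. rewrite !Rmult_0_l, Ropp_0, exp_0, cos_0, sin_0. Rchg; ring.
Qed.

Definition Fr a b w := RInt (tld a (phr a b)) 0 w.
Definition Fi a b w := RInt (tld b (phi a b)) 0 w.

Lemma ex_r a b x y : ex_RInt (tld a (phr a b)) x y.
Proof. apply (ex_RInt_continuous (V:=R_CompleteNormedModule)). intros; apply cont_r. Qed.
Lemma ex_i a b x y : ex_RInt (tld b (phi a b)) x y.
Proof. apply (ex_RInt_continuous (V:=R_CompleteNormedModule)). intros; apply cont_i. Qed.

Lemma Fr_d a b w : is_derive (Fr a b) w (tld a (phr a b) w).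
Proof.
  apply is_derive_RInt with 0. apply filter_forall. intro; apply RInt_correct, ex_r.
  apply cont_r.
Qed.
Lemma Fi_d a b w : is_derive (Fi a b) w (tld b (phi a b) w).
Proof.
  apply is_derive_RInt with 0. apply filter_forall. intro; apply RInt_correct, ex_i.
  apply cont_i.
Qed.

Lemma G_eq a b v : 0 < v -> G v (a, b) = (Fr a b (/ v), Fi a b (/ v)).
Proof.
  intros Hv. unfold G. apply (is_RInt_unique (V:=C_R_CompleteNormedModule)).
  assert (Hi : 0 < / v) by (apply Rinv_0_lt_compat; exact Hv).
  apply (is_RInt_fct_extend_pair (U:=R_NormedModule) (V:=R_NormedModule)).
  - eapply is_RInt_ext; [|apply (RInt_correct (V:=R_CompleteNormedModule)), ex_r].
    intros x Hx. rewrite Rmin_left, Rmax_right in Hx by lra.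
    fold (hG (a, b) x). rewrite hG_eq by lra. unfold tld. simpl.
    destruct (Req_EM_T x 0); [lra|reflexivity].
  - eapply is_RInt_ext; [|apply (RInt_correct (V:=R_CompleteNormedModule)), ex_i].
    intros x Hx. rewrite Rmin_left, Rmax_right in Hx by lra.
    fold (hG (a, b) x). rewrite hG_eq by lra. unfold tld. simpl.
    destruct (Req_EM_T x 0); [lra|reflexivity].
Qed.


Lemma loc_pos v : 0 < v -> locally v (fun t => 0 < t).
Proof.
  intros Hv. exists (mkposreal v Hv). intros t Ht. cbn in Ht. unfold AbsRing_ball, abs, minus, plus, opp in Ht. simpl in Ht.
  apply Rabs_lt_between in Ht. lra.
Qed.

Lemma inv_d v : v <> 0 -> is_derive (fun x : R => / x) v (- / (v * v)).
Proof. intros Hv. auto_derive; auto. field; auto. Qed.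

Lemma CD_G a b : CD (fun v => G v (a, b)) (fun x => Cmult (Cminus (Ef (a, b) x) 1) (wf x)).
Proof.
  intros v Hv. assert (Hv' : v <> 0) by lra.
  assert (Hi : / v <> 0) by (apply Rinv_neq_0_compat; lra).
  split.
  - apply is_derive_ext_loc with (f := fun x => Fr a b (/ x)).
    { eapply filter_imp; [|apply (loc_pos v Hv)]. intros t Ht. rewrite (G_eq a b t Ht). reflexivity. }
    eapply isd_eq. apply (is_derive_comp (Fr a b) (fun x => / x)). apply Fr_d. apply inv_d; auto.
    unfold tld. destruct (Req_EM_T (/ v) 0); [congruence|].
    unfold Ef, wf, Cexp, phr. Rchg.
    replace (- (/ v * b + 0 * a)) with (- (/ v * b)) by ring. rewrite cos_neg, sin_neg.
    unfold Rminus. replace (- (/ v * a + - (0 * b))) with (- (/ v * a)) by ring.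
    set (X := exp _). set (Y := cos _). field. auto.
  - apply is_derive_ext_loc with (f := fun x => Fi a b (/ x)).
    { eapply filter_imp; [|apply (loc_pos v Hv)]. intros t Ht. rewrite (G_eq a b t Ht). reflexivity. }
    eapply isd_eq. apply (is_derive_comp (Fi a b) (fun x => / x)). apply Fi_d. apply inv_d; auto.
    unfold tld. destruct (Req_EM_T (/ v) 0); [congruence|].
    unfold Ef, wf, Cexp, phi. Rchg.
    replace (- (/ v * b + 0 * a)) with (- (/ v * b)) by ring. rewrite cos_neg, sin_neg.
    unfold Rminus. replace (- (/ v * a + - (0 * b))) with (- (/ v * a)) by ring.
    set (X := exp _). set (Y := sin _). field. auto.
Qed.


Lemma exp_neg_le1 c : 0 <= c -> exp (- c) <= 1.
Proof. intros H. rewrite <- exp_0. destruct (Req_dec c 0) as [->|Hc]. rewrite Ropp_0; lra. left; apply exp_increasing; lra. Qed.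

Lemma phr_b1 b t : 0 <= t -> Rabs (phr 1 b t) <= (1 + Rabs b) * t.
Proof.
  intros Ht.
  destruct (MVT_abs (phr 1 b) (fun x => 1 * exp (-(x*1)) * cos (x*b) + exp (-(x*1)) * b * sin (x*b)) 0 t) as [c [Hc Hci]].
  { intros c _. apply is_derive_Reals, phr_d. }
  rewrite Rmin_left, Rmax_right in Hci by lra.
  replace (phr 1 b 0) with 0 in Hc by (unfold phr; rewrite Rmult_0_l, Ropp_0, exp_0, Rmult_0_l, cos_0; ring).
  rewrite Rminus_0_r, Rminus_0_r in Hc. rewrite Hc, (Rabs_right t) by lra.
  apply Rmult_le_compat_r; auto.
  assert (He := exp_neg_le1 (c*1) ltac:(lra)). assert (Hp := exp_pos (-(c*1))).
  eapply Rle_trans; [apply Rabs_triang|].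
  rewrite !Rabs_mult, (Rabs_right 1) by lra. rewrite (Rabs_right (exp _)) by lra.
  assert (H1 := COS_bound (c*b)). assert (H2 := SIN_bound (c*b)).
  assert (Rabs (cos (c*b)) <= 1) by (apply Rabs_le; lra).
  assert (Rabs (sin (c*b)) <= 1) by (apply Rabs_le; lra).
  assert (0 <= Rabs b) by apply Rabs_pos.
  assert (0 <= Rabs (cos (c*b))) by apply Rabs_pos.
  assert (0 <= Rabs (sin (c*b))) by apply Rabs_pos.
  assert (exp (-(c*1)) * Rabs (cos (c*b)) <= 1) by nra.
  assert (exp (-(c*1)) * Rabs (sin (c*b)) <= 1) by nra.
  assert (0 <= Rabs b * (1 - exp (-(c*1)) * Rabs (sin (c*b)))) by (apply Rmult_le_pos; lra).
  assert (0 <= Rabs b * (1 - exp (-(c*1)) * Rabs (cos (c*b)))) by (apply Rmult_le_pos; lra).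
  nra.
Qed.

Lemma phi_b1 b t : 0 <= t -> Rabs (phi 1 b t) <= (1 + Rabs b) * t.
Proof.
  intros Ht.
  destruct (MVT_abs (phi 1 b) (fun x => - 1 * exp (-(x*1)) * sin (x*b) + exp (-(x*1)) * b * cos (x*b)) 0 t) as [c [Hc Hci]].
  { intros c _. apply is_derive_Reals, phi_d. }
  rewrite Rmin_left, Rmax_right in Hci by lra.
  replace (phi 1 b 0) with 0 in Hc by (unfold phi; rewrite !Rmult_0_l, sin_0; ring).
  rewrite Rminus_0_r, Rminus_0_r in Hc. rewrite Hc, (Rabs_right t) by lra.
  apply Rmult_le_compat_r; auto.
  assert (He := exp_neg_le1 (c*1) ltac:(lra)). assert (Hp := exp_pos (-(c*1))).
  eapply Rle_trans; [apply Rabs_triang|].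
  rewrite !Rabs_mult. replace (Rabs (-1)) with 1 by (unfold Rabs; destruct Rcase_abs; lra). rewrite (Rabs_right (exp _)) by lra.
  assert (H1 := COS_bound (c*b)). assert (H2 := SIN_bound (c*b)).
  assert (Rabs (cos (c*b)) <= 1) by (apply Rabs_le; lra).
  assert (Rabs (sin (c*b)) <= 1) by (apply Rabs_le; lra).
  assert (0 <= Rabs b) by apply Rabs_pos.
  assert (0 <= Rabs (cos (c*b))) by apply Rabs_pos.
  assert (0 <= Rabs (sin (c*b))) by apply Rabs_pos.
  assert (exp (-(c*1)) * Rabs (cos (c*b)) <= 1) by nra.
  assert (exp (-(c*1)) * Rabs (sin (c*b)) <= 1) by nra.
  assert (0 <= Rabs b * (1 - exp (-(c*1)) * Rabs (sin (c*b)))) by (apply Rmult_le_pos; lra).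
  assert (0 <= Rabs b * (1 - exp (-(c*1)) * Rabs (cos (c*b)))) by (apply Rmult_le_pos; lra).
  nra.
Qed.

Lemma phr_b2 b t : 0 <= t -> Rabs (phr 1 b t) <= 2.
Proof.
  intros Ht. unfold phr. assert (He := exp_neg_le1 (t*1) ltac:(lra)). assert (Hp := exp_pos (-(t*1))).
  assert (H1 := COS_bound (t*b)). apply Rabs_le. split; nra.
Qed.
Lemma phi_b2 b t : 0 <= t -> Rabs (phi 1 b t) <= 2.
Proof.
  intros Ht. unfold phi. assert (He := exp_neg_le1 (t*1) ltac:(lra)). assert (Hp := exp_pos (-(t*1))).
  assert (H1 := SIN_bound (t*b)). apply Rabs_le. split; nra.
Qed.


Lemma is_RInt_kt k c0 B : 0 < c0 -> c0 <= B ->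
  is_RInt (V:=R_CompleteNormedModule) (fun t => k / t) c0 B (k * ln B - k * ln c0).
Proof.
  intros H0 H1.
  apply (is_RInt_derive (V:=R_CompleteNormedModule) (fun t => k * ln t) (fun t => k / t)).
  - intros x Hx. rewrite Rmin_left, Rmax_right in Hx by lra.
    auto_derive. lra. field. lra.
  - intros x Hx. rewrite Rmin_left, Rmax_right in Hx by lra.
    apply (ex_derive_continuous (K:=R_AbsRing) (V:=R_NormedModule)). auto_derive. lra.
Qed.

Lemma int_bound (f : R -> R) S u : (forall x, continuous f x) ->
  (forall t, 0 <= t -> Rabs (f t) <= 2 * S) -> (forall t, 0 < t -> Rabs (f t) <= 2 / t) ->
  1 <= u -> u < S -> Rabs (RInt f 0 (/ u)) <= 2 + 2 * ln S.
Proof.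
  intros Hc Hb1 Hb2 Hu HS.
  assert (Hex : forall a b, ex_RInt (V:=R_CompleteNormedModule) f a b).
  { intros; apply (ex_RInt_continuous (V:=R_CompleteNormedModule)); intros; apply Hc. }
  assert (HS0 : 0 < S) by lra. assert (Hu0 : 0 < u) by lra.
  assert (Hc0 : 0 < / S) by (apply Rinv_0_lt_compat; lra).
  assert (HcB : / S < / u) by (apply Rinv_lt_contravar; nra).
  rewrite <- (RInt_Chasles f 0 (/ S) (/ u)) by apply Hex.
  change (plus (RInt f 0 (/ S)) (RInt f (/ S) (/ u))) with (RInt f 0 (/ S) + RInt f (/ S) (/ u)).
  assert (H1 : Rabs (RInt f 0 (/ S)) <= 2).
  { eapply Rle_trans. apply abs_RInt_le_const. lra. apply Hex. intros t Ht. apply Hb1. lra.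
    right. field. lra. }
  assert (Hi := is_RInt_kt 2 (/ S) (/ u) Hc0 (Rlt_le _ _ HcB)).
  assert (Hi' := is_RInt_kt (-2) (/ S) (/ u) Hc0 (Rlt_le _ _ HcB)).
  assert (Hr : RInt f (/ S) (/ u) <= 2 * ln (/ u) - 2 * ln (/ S)).
  { rewrite <- (is_RInt_unique _ _ _ _ Hi). apply RInt_le. lra. apply Hex. eexists; exact Hi.
    intros x Hx. specialize (Hb2 x ltac:(lra)). apply Rabs_le_between in Hb2. lra. }
  assert (Hl : -2 * ln (/ u) - -2 * ln (/ S) <= RInt f (/ S) (/ u)).
  { rewrite <- (is_RInt_unique _ _ _ _ Hi'). apply RInt_le. lra. eexists; exact Hi'. apply Hex.
    intros x Hx. specialize (Hb2 x ltac:(lra)). apply Rabs_le_between in Hb2.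
    unfold Rdiv in *. lra. }
  rewrite !ln_Rinv in Hr, Hl by lra.
  assert (0 <= ln u) by (rewrite <- ln_1; apply ln_le; lra).
  assert (Rabs (RInt f (/ S) (/ u)) <= 2 * ln S) by (apply Rabs_le; lra).
  eapply Rle_trans. apply Rabs_triang. lra.
Qed.


Lemma tr_b1 b t : 0 <= t -> Rabs (tld 1 (phr 1 b) t) <= 1 + Rabs b.
Proof.
  intros Ht. unfold tld. destruct (Req_EM_T t 0).
  - rewrite Rabs_R1. assert (0 <= Rabs b) by apply Rabs_pos. lra.
  - unfold Rdiv. rewrite Rabs_mult, Rabs_inv, (Rabs_right t) by lra.
    apply (Rmult_le_reg_r t); [lra|]. rewrite Rmult_assoc, Rinv_l, Rmult_1_r by lra.
    apply phr_b1; lra.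
Qed.
Lemma ti_b1 b t : 0 <= t -> Rabs (tld b (phi 1 b) t) <= 1 + Rabs b.
Proof.
  intros Ht. unfold tld. destruct (Req_EM_T t 0).
  - lra.
  - unfold Rdiv. rewrite Rabs_mult, Rabs_inv, (Rabs_right t) by lra.
    apply (Rmult_le_reg_r t); [lra|]. rewrite Rmult_assoc, Rinv_l, Rmult_1_r by lra.
    apply phi_b1; lra.
Qed.
Lemma tr_b2 b t : 0 < t -> Rabs (tld 1 (phr 1 b) t) <= 2 / t.
Proof.
  intros Ht. unfold tld. destruct (Req_EM_T t 0); [lra|].
  unfold Rdiv. rewrite Rabs_mult, Rabs_inv, (Rabs_right t) by lra.
  apply Rmult_le_compat_r. left; apply Rinv_0_lt_compat; lra. apply phr_b2; lra.
Qed.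
Lemma ti_b2 b t : 0 < t -> Rabs (tld b (phi 1 b) t) <= 2 / t.
Proof.
  intros Ht. unfold tld. destruct (Req_EM_T t 0); [lra|].
  unfold Rdiv. rewrite Rabs_mult, Rabs_inv, (Rabs_right t) by lra.
  apply Rmult_le_compat_r. left; apply Rinv_0_lt_compat; lra. apply phi_b2; lra.
Qed.

Lemma G_bound b u : 1 <= u -> u < Cmod (1, b) -> Cmod (G u (1, b)) <= 4 * (1 + ln (Cmod (1, b))).
Proof.
  intros Hu HS. set (S := Cmod (1, b)) in *.
  assert (HM := Rmax_Cmod (1, b)). fold S in HM. simpl in HM.
  assert (Hb : 1 + Rabs b <= 2 * S).
  { assert (Rabs 1 <= S) by (eapply Rle_trans; [apply Rmax_l|exact HM]).
    assert (Rabs b <= S) by (eapply Rle_trans; [apply Rmax_r|exact HM]).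
    rewrite Rabs_R1 in *. lra. }
  rewrite G_eq by lra.
  assert (H1 : Rabs (Fr 1 b (/ u)) <= 2 + 2 * ln S).
  { apply int_bound; auto. apply cont_r. intros t Ht. eapply Rle_trans. apply tr_b1; auto. lra.
    apply tr_b2. }
  assert (H2 : Rabs (Fi 1 b (/ u)) <= 2 + 2 * ln S).
  { apply int_bound; auto. apply cont_i. intros t Ht. eapply Rle_trans. apply ti_b1; auto. lra.
    apply ti_b2. }
  eapply Rle_trans. apply Cmod_2Rmax. simpl fst; simpl snd.
  assert (sqrt 2 <= 2).
  { rewrite <- (sqrt_Rsqr 2) at 2 by lra. apply sqrt_le_1_alt. unfold Rsqr; lra. }
  assert (0 <= Rmax (Rabs (Fr 1 b (/ u))) (Rabs (Fi 1 b (/ u)))).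
  { eapply Rle_trans. apply Rabs_pos. apply Rmax_l. }
  assert (Rmax (Rabs (Fr 1 b (/ u))) (Rabs (Fi 1 b (/ u))) <= 2 + 2 * ln S) by (apply Rmax_lub; auto).
  assert (0 <= sqrt 2) by apply sqrt_pos.
  nra.
Qed.


Theorem lemma9 (m nu : nat) (Hm : (1 <= m)%nat) (Hnu : (1 <= nu)%nat) :
  exists K : R, 0 < K /\
    forall (s : C) (u : R),
      Re s = 1 -> 1 <= u -> Cmod s > u ->
      Cmod (Cderive_n (fun v => Cpow (G v s) m) nu u)
        <= K * ((1 + ln (Cmod s)) ^ (m - 1) / u ^ nu) * (Cmod s / u) ^ (nu - 1).
Proof.
  set (l := Nat.iter nu dl (F0 m)).
  assert (Hsc : 0 <= sumc l).
  { clear. induction l as [|[c j e b a] l IH]; simpl. lra. assert (0 <= Rabs c) by apply Rabs_pos. lra. }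
  exists (4 ^ m * (sumc l + 1)). split.
  { apply Rmult_lt_0_compat. apply pow_lt; lra. lra. }
  intros [a b] u Hre Hu HS. simpl in Hre. subst a.
  set (S := Cmod (1, b)) in *.
  assert (Hu0 : 0 < u) by lra.
  set (g := fun v => G v (1, b)).
  assert (HF := CD_Fk g (Ef (1, b)) wf (1, b) (CD_G 1 b) (CD_Ef (1, b)) CD_wf m).
  destruct (Dn_CD _ HF nu u Hu0) as [D1 D2].
  assert (Heq : Cderive_n (fun v => Cpow (G v (1, b)) m) nu u = Fk g (Ef (1, b)) wf (1, b) m nu u).
  { unfold Cderive_n, Re, Im.
    rewrite (Derive_n_ext _ (fun x => fst (Fk g (Ef (1, b)) wf (1, b) m 0 x))).
    rewrite (Derive_n_ext (fun x => snd (Cpow (G x (1, b)) m)) (fun x => snd (Fk g (Ef (1, b)) wf (1, b) m 0 x))).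
    rewrite D1, D2. destruct (Fk _ _ _ _ _ _ _); reflexivity.
    intro t; rewrite Fk0; reflexivity.
    intro t; rewrite Fk0; reflexivity. }
  rewrite Heq. unfold Fk. fold l.
  assert (HSpos : 0 < S) by lra.
  set (L := 1 + ln S).
  assert (HL : 1 <= L).
  { unfold L. assert (0 <= ln S) by (rewrite <- ln_1; apply ln_le; lra). lra. }
  assert (Hg : Cmod (g u) <= 4 * L) by (unfold g, L, S; apply G_bound; [lra | exact HS]).
  assert (HE : Cmod (Ef (1, b) u) <= 1).
  { unfold Ef. rewrite Cmod_Cexp. simpl.
    replace (/ u * 1 - 0 * b) with (/ u) by ring. apply exp_neg_le1.
    left; apply Rinv_0_lt_compat; lra. }
  assert (Hw : Cmod (wf u) = / u).
  { unfold wf. rewrite Cmod_R. apply Rabs_right. left; apply Rinv_0_lt_compat; lra. }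
  set (A := S / u).
  assert (HA : 1 <= A).
  { unfold A. apply (Rmult_le_reg_r u); [lra|]. unfold Rdiv. rewrite Rmult_assoc, Rinv_l; lra. }
  set (M := (4 * L) ^ (m - 1) * (A ^ (nu - 1) * (/ u) ^ nu)).
  assert (HM0 : 0 <= M).
  { unfold M. apply Rmult_le_pos; [apply pow_le; lra|]. apply Rmult_le_pos; apply pow_le.
    lra. left; apply Rinv_0_lt_compat; lra. }
  eapply Rle_trans.
  apply (ev_bound g (Ef (1, b)) wf (1, b) l u M HM0).
  - assert (HI := Inv_iter m nu Hm Hnu). fold l in HI.
    eapply List.Forall_impl; [|exact HI]. intros [c j e b' a] Ht. simpl in Ht.
    destruct Ht as [-> | [Hj [Hb' Ha]]].
    + unfold tval. rewrite Cmod_mult, Cmod_R, Rabs_R0. lra.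
    + unfold tval. rewrite !Cmod_mult, Cmod_R, !Cmod_pow, Hw. fold S.
      apply Rmult_le_compat_l. apply Rabs_pos.
      assert (P1 : Cmod (g u) ^ j <= (4 * L) ^ (m - 1)).
      { eapply Rle_trans. apply pow_incr. split. apply Cmod_ge_0. exact Hg.
        apply Rle_pow; [lra|exact Hj]. }
      assert (P2 : Cmod (Ef (1, b) u) ^ e <= 1).
      { assert (H := pow_incr _ _ e (conj (Cmod_ge_0 _) HE)). rewrite pow1 in H. exact H. }
      assert (P3 : S ^ b' * (/ u) ^ a <= A ^ (nu - 1) * (/ u) ^ nu).
      { subst a. rewrite pow_add, <- Rmult_assoc, <- Rpow_mult_distr.
        apply Rmult_le_compat_r. apply pow_le. left; apply Rinv_0_lt_compat; lra.
        apply Rle_pow; [exact HA|exact Hb']. }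
      assert (0 <= Cmod (g u) ^ j) by (apply pow_le, Cmod_ge_0).
      assert (0 <= Cmod (Ef (1, b) u) ^ e) by (apply pow_le, Cmod_ge_0).
      assert (0 <= S ^ b' * (/ u) ^ a).
      { apply Rmult_le_pos; apply pow_le. lra. left; apply Rinv_0_lt_compat; lra. }
      unfold M.
      replace (Cmod (g u) ^ j * Cmod (Ef (1, b) u) ^ e * S ^ b' * (/ u) ^ a)
        with (Cmod (g u) ^ j * (Cmod (Ef (1, b) u) ^ e * (S ^ b' * (/ u) ^ a))) by ring.
      apply Rmult_le_compat; auto. apply Rmult_le_pos; auto.
      rewrite <- (Rmult_1_l (A ^ (nu - 1) * (/ u) ^ nu)).
      apply Rmult_le_compat; auto.
  - unfold M. rewrite Rpow_mult_distr, pow_inv.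
    assert (0 < u ^ nu) by (apply pow_lt; lra).
    assert (0 <= L ^ (m - 1)) by (apply pow_le; lra).
    assert (0 <= A ^ (nu - 1)) by (apply pow_le; lra).
    assert (H4 : 4 ^ (m - 1) <= 4 ^ m) by (apply Rle_pow; lia || lra).
    assert (0 <= 4 ^ (m - 1)) by (apply pow_le; lra).
    assert (0 < / u ^ nu) by (apply Rinv_0_lt_compat; lra).
    unfold Rdiv. fold A.
    replace (sumc l * (4 ^ (m - 1) * L ^ (m - 1) * (A ^ (nu - 1) * / u ^ nu)))
      with ((sumc l * 4 ^ (m - 1)) * (L ^ (m - 1) * / u ^ nu * A ^ (nu - 1))) by ring.
    replace (4 ^ m * (sumc l + 1) * (L ^ (m - 1) * / u ^ nu) * A ^ (nu - 1))
      with ((4 ^ m * (sumc l + 1)) * (L ^ (m - 1) * / u ^ nu * A ^ (nu - 1))) by ring.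
    apply Rmult_le_compat_r.
    + apply Rmult_le_pos; [apply Rmult_le_pos|]; lra.
    + nra.
Qed.
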